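(* Let $\lambda,\mathfrak{g}_s>0$ and let $\alpha$ be a positive real root of $\alpha^3-\lambda\alpha+\mathfrak{g}_s=0$ with $2\alpha^3>\mathfrak{g}_s$; set $\Sigma=\tfrac12\sqrt{4\alpha^2-2\mathfrak{g}_s/\alpha}>0$. For $T>0$ define $$Z_1(T)=\alpha+\frac{\Sigma^2}{\sinh(\Sigma T)\,[\Sigma\cosh(\Sigma T)+\alpha\sinh(\Sigma T)]},\qquad Z_0(T)=\frac{\mathfrak{g}_s}{2\alpha}\Big(1-\frac{\Sigma^2}{[\Sigma\cosh(\Sigma T)+\alpha\sinh(\Sigma T)]^2}\Big).$$ Then $Z_1(T)\to\alpha$ as $T\to\infty$, and for all $T>0$: $$Z_1'(T)=\lambda-Z_1(T)^2-2Z_0(T),\qquad Z_0'(T)=2Z_1(T)Z_0(T)-\mathfrak{g}_s,$$ $$Z_1'(T)=-\bar W(Z_1(T)),\qquad Z_0(T)=\mathfrak{g}_s\,W_{\lambda,\mathfrak{g}_s}(Z_1(T)),$$ where $\bar W(X)=(X-\alpha)\sqrt{(X+\alpha)^2-2\mathfrak{g}_s/\alpha}$ and $W_{\lambda,\mathfrak{g}_s}(X)=\dfrac{-(X^2-\lambda)+(X-\alpha)\sqrt{(X+\alpha)^2-2\mathfrak{g}_s/\alpha}}{2\mathfrak{g}_s}$ (positive square roots, $X>\alpha$).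
   Context: These functions are the continuum (scaling) limits of generating functions of labeled trees encoding quadrangulations with a weight $\mathfrak{g}=\mathfrak{g}_s\epsilon^3$ per local maximum of the distance labeling, with $g=\tfrac14(1-\lambda\epsilon^2)$ and distance $t=T/\epsilon$; the claim itself is an identity about the explicit functions above. *)

(* Defs.v *)
From Stdlib Require Import Reals.
Open Scope R_scope.

Definition Sigma (alpha gs : R) : R := / 2 * sqrt (4 * alpha ^ 2 - 2 * gs / alpha).

Definition Dn (alpha gs T : R) : R :=
  Sigma alpha gs * cosh (Sigma alpha gs * T) + alpha * sinh (Sigma alpha gs * T).

Definition Zone (alpha gs T : R) : R :=
  alpha + (Sigma alpha gs) ^ 2 / (sinh (Sigma alpha gs * T) * Dn alpha gs T).

Definition Zzero (alpha gs T : R) : R :=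
  gs / (2 * alpha) * (1 - (Sigma alpha gs) ^ 2 / (Dn alpha gs T) ^ 2).

Definition Wbar (alpha gs X : R) : R :=
  (X - alpha) * sqrt ((X + alpha) ^ 2 - 2 * gs / alpha).

Definition W (lam gs alpha X : R) : R :=
  (- (X ^ 2 - lam) + (X - alpha) * sqrt ((X + alpha) ^ 2 - 2 * gs / alpha)) / (2 * gs).

(* Main.v *)
Require Import Defs.
From Stdlib Require Import Reals.
From Stdlib Require Import Lra.
From Coquelicot Require Import Coquelicot.
Open Scope R_scope.

Ltac efield a S T :=
  unfold sinh, cosh; rewrite ?exp_Ropp;
  let He := fresh "He" in
  assert (He : 1 < exp (S*T)) by (rewrite <- exp_0; apply exp_increasing; nra);
  set (e := exp (S*T)) in *;
  let He2 := fresh "He2" in assert (He2 : 1 < e * e) by nra;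
  let Ha1 := fresh in assert (Ha1 : 0 < a * (e*e - 1)) by (apply Rmult_lt_0_compat; lra);
  let Ha2 := fresh in assert (Ha2 : 0 < S * (e*e + 1)) by (apply Rmult_lt_0_compat; lra);
  field; repeat split; first [apply Rgt_not_eq; nra | apply Rlt_not_eq; nra].

Theorem mainTheorem9 (lam gs alpha : R) :
  0 < lam -> 0 < gs -> 0 < alpha ->
  alpha ^ 3 - lam * alpha + gs = 0 ->
  2 * alpha ^ 3 > gs ->
  0 < Sigma alpha gs /\
  (forall eps : R, 0 < eps ->
     exists M : R, forall T : R, M < T -> Rabs (Zone alpha gs T - alpha) < eps) /\
  (forall T : R, 0 < T ->
     derivable_pt_lim (Zone alpha gs) T
       (lam - (Zone alpha gs T) ^ 2 - 2 * Zzero alpha gs T) /\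
     derivable_pt_lim (Zzero alpha gs) T
       (2 * Zone alpha gs T * Zzero alpha gs T - gs) /\
     derivable_pt_lim (Zone alpha gs) T (- Wbar alpha gs (Zone alpha gs T)) /\
     Zzero alpha gs T = gs * W lam gs alpha (Zone alpha gs T)).
Proof.
intros Hl Hg Ha Hcub Hbig.
set (a := alpha) in *.
assert (HX : 0 < 4 * a ^ 2 - 2 * gs / a).
{ assert (gs / a < 2 * a^2).
  { apply (Rmult_lt_reg_r a); [lra|]. unfold Rdiv. rewrite Rmult_assoc, Rinv_l by lra. nra. }
  lra. }
assert (HS : 0 < Sigma a gs).
{ unfold Sigma. apply Rmult_lt_0_compat; [lra|]. apply sqrt_lt_R0; lra. }
assert (HS2 : Sigma a gs ^ 2 = a^2 - gs / (2*a)).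
{ unfold Sigma. rewrite Rpow_mult_distr, pow2_sqrt by lra. field. lra. }
assert (HG : gs = 2 * a * (a^2 - Sigma a gs ^ 2)).
{ rewrite HS2. field. lra. }
assert (HL : lam = a^2 + 2 * (a^2 - Sigma a gs ^ 2)).
{ rewrite HS2. apply (Rmult_eq_reg_r a); [|lra]. field_simplify; [|lra]. nra. }
split; [exact HS|].
split.
{ intros eps Heps. exists (4 / eps). intros T HT.
  assert (HT0 : 0 < T). { assert (0 < 4/eps) by (apply Rdiv_lt_0_compat; lra). lra. }
  assert (HTe : 4 < eps * T).
  { apply (Rmult_lt_compat_l eps) in HT; [|lra]. unfold Rdiv in HT.
    rewrite <- Rmult_assoc, (Rmult_comm eps 4), Rmult_assoc, Rinv_r in HT by lra. lra. }
  unfold Zone, Dn. set (S := Sigma a gs) in *. clearbody S.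
  unfold sinh, cosh. rewrite exp_Ropp.
  assert (HST : 0 < S*T) by nra.
  assert (He1 : 1 + S*T < exp (S*T)) by (apply exp_ineq1; nra).
  set (e := exp (S*T)) in *.
  assert (He0 : 0 < e) by nra.
  assert (Hi : 0 < /e < 1).
  { split; [apply Rinv_0_lt_compat; lra|]. rewrite <- Rinv_1. apply Rinv_lt_contravar; nra. }
  assert (Hs : S*T/2 < (e - /e)/2) by lra.
  assert (Hc : 1/2 < (e + /e)/2) by lra.
  set (s := (e - / e) / 2) in *. set (c := (e + / e) / 2) in *.
  assert (HD : S/2 < S * c + a * s).
  { assert (S*(1/2) < S*c) by (apply Rmult_lt_compat_l; lra). assert (0 < a*s) by (apply Rmult_lt_0_compat; lra). lra. }
  assert (HP : S*T*S/4 < s * (S * c + a * s)).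
  { assert (S*T/2 * (S/2) < s * (S/2)) by (apply Rmult_lt_compat_r; lra).
    assert (s * (S/2) < s * (S * c + a * s)) by (apply Rmult_lt_compat_l; lra). lra. }
  set (P := s * (S * c + a * s)) in *.
  replace (a + S ^ 2 / P - a) with (S^2 / P) by ring.
  assert (HP0 : 0 < P) by nra.
  rewrite Rabs_pos_eq.
  2:{ apply Rlt_le, Rdiv_lt_0_compat; nra. }
  apply (Rmult_lt_reg_r P); [lra|]. unfold Rdiv. rewrite Rmult_assoc, Rinv_l by lra.
  assert (eps * (S*T*S/4) < eps * P) by (apply Rmult_lt_compat_l; lra).
  assert (0 < S*S) by nra.
  nra. }
intros T HT.
assert (HaS : 0 < a^2 - Sigma a gs ^2).
{ rewrite HS2. assert (0 < gs/(2*a)) by (apply Rdiv_lt_0_compat; lra). lra. }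
assert (HST : 0 < Sigma a gs * T) by nra.
assert (Hsh : 0 < sinh (Sigma a gs * T)) by (rewrite <- sinh_0; apply sinh_lt; lra).
assert (Hch : 0 < cosh (Sigma a gs * T)).
{ unfold cosh. assert (0 < exp (Sigma a gs * T)) by apply exp_pos.
  assert (0 < exp (- (Sigma a gs * T))) by apply exp_pos. lra. }
assert (Hsq : sqrt ((Zone a gs T + a)^2 - 2*gs/a) =
  (Sigma a gs^2*(cosh (Sigma a gs * T)^2+sinh (Sigma a gs * T)^2)
    + 2*a*Sigma a gs*sinh (Sigma a gs * T)*cosh (Sigma a gs * T))
  / (sinh (Sigma a gs * T)*(Sigma a gs*cosh (Sigma a gs * T)+a*sinh (Sigma a gs * T)))).
{ rewrite <- sqrt_pow2.
  2:{ apply Rlt_le, Rdiv_lt_0_compat.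
      - assert (0 < Sigma a gs ^ 2) by nra.
        assert (0 < cosh (Sigma a gs * T) ^ 2) by nra.
        assert (0 < a * Sigma a gs * sinh (Sigma a gs * T) * cosh (Sigma a gs * T)).
        { apply Rmult_lt_0_compat; [|exact Hch]. apply Rmult_lt_0_compat; [|exact Hsh]. apply Rmult_lt_0_compat; assumption. }
        nra.
      - apply Rmult_lt_0_compat; [lra|]. nra. }
  f_equal. unfold Zone, Dn. set (S := Sigma a gs) in *. clearbody S. rewrite HG.
  efield a S T. }
assert (HD1 : derivable_pt_lim (Zone a gs) T (lam - (Zone a gs T) ^ 2 - 2 * Zzero a gs T)).
{ apply is_derive_Reals. unfold Zone, Zzero, Dn. set (S := Sigma a gs) in *. clearbody S.
  rewrite HL, HG. auto_derive.
  - apply Rgt_not_eq. apply Rmult_lt_0_compat; nra.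
  - efield a S T. }
split; [exact HD1|].
split.
{ apply is_derive_Reals. unfold Zone, Zzero, Dn. set (S := Sigma a gs) in *. clearbody S.
  rewrite HG. auto_derive.
  - apply Rgt_not_eq. apply Rmult_lt_0_compat; nra.
  - efield a S T. }
split.
{ replace (- Wbar a gs (Zone a gs T)) with (lam - (Zone a gs T) ^ 2 - 2 * Zzero a gs T);
  [exact HD1|].
  unfold Wbar. rewrite Hsq. unfold Zone, Zzero, Dn. set (S := Sigma a gs) in *. clearbody S.
  rewrite HL, HG. efield a S T. }
unfold W. rewrite Hsq. unfold Zone, Zzero, Dn. set (S := Sigma a gs) in *. clearbody S.
rewrite HL, HG. efield a S T.
Qed.
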